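(* Let $(d_A,d_B)$ be a bipartite degree sequence that has a realization with matching number $\nu_{\min}$ and a realization with matching number $\nu_{\max}$, and let $\nu$ be an integer with $\nu_{\min}\leq\nu\leq\nu_{\max}$. Then $(d_A,d_B)$ has a realization with matching number $\nu$.
   Context: All graphs are finite, simple and undirected. For a bipartite graph with fixed partite sets $A,B$, its bipartite degree sequence is the pair of nonincreasing sequences of degrees of vertices in $A$ and in $B$; a pair of sequences is a bipartite degree sequence if it arises this way from some bipartite graph, called a realization. The matching number is the maximum size of a matching. *)

(* Defs.v *)
From mathcomp Require Import all_boot.
Set Implicit Arguments. Unset Strict Implicit. Unset Printing Implicit Defensive.

(* A bipartite graph with fixed partite sets A = 'I_m and B = 'I_n is given by
   its edge set E : {set 'I_m * 'I_n}; (a, b) \in E means a ~ b. *)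

Definition degA m n (E : {set 'I_m * 'I_n}) (a : 'I_m) : nat :=
  #|[set b : 'I_n | (a, b) \in E]|.
Definition degB m n (E : {set 'I_m * 'I_n}) (b : 'I_n) : nat :=
  #|[set a : 'I_m | (a, b) \in E]|.

Definition bdeg_seq m n (E : {set 'I_m * 'I_n}) : seq nat * seq nat :=
  (sort geq [seq degA E a | a <- enum 'I_m], sort geq [seq degB E b | b <- enum 'I_n]).

Definition realizes m n (E : {set 'I_m * 'I_n}) (dA dB : seq nat) : Prop :=
  bdeg_seq E = (dA, dB).

Definition is_matching m n (E M : {set 'I_m * 'I_n}) : bool :=
  (M \subset E) &&
  [forall e1 in M, forall e2 in M, (e1 != e2) ==> (e1.1 != e2.1) && (e1.2 != e2.2)].

Definition matching_number m n (E : {set 'I_m * 'I_n}) : nat :=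
  \max_(M : {set 'I_m * 'I_n} | is_matching E M) #|M|.

(* Main.v *)
Require Import Defs.
From mathcomp Require Import all_boot all_fingroup.
From Stdlib Require Import Classical.
From mathcomp Require Import zify.
Set Implicit Arguments. Unset Strict Implicit. Unset Printing Implicit Defensive.

Lemma nu_ge m n (E M : {set 'I_m * 'I_n}) : is_matching E M -> #|M| <= matching_number E.
Proof. by move=> H; rewrite /matching_number; apply: (leq_bigmax_cond M H). Qed.

Lemma nu_att m n (E : {set 'I_m * 'I_n}) :
  exists M, is_matching E M /\ #|M| = matching_number E.
Proof.
have H0 : is_matching E set0.
  by rewrite /is_matching sub0set; apply/forall_inP => e; rewrite inE.
have : 0 < #|[pred M | is_matching E M]|.
  by apply/card_gt0P; exists set0; rewrite inE.
move/(eq_bigmax_cond (fun M : {set 'I_m * 'I_n} => #|M|)) => [M0 HM0 HE].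
exists M0; split; first by move: HM0; rewrite inE.
rewrite /matching_number HE; done.
Qed.

Definition sw m n (X : {set 'I_m * 'I_n}) a a' b b' :=
  X :\ (a, b) :\ (a', b') :|: [set (a, b'); (a', b)].

Lemma sw_nu m n (X : {set 'I_m * 'I_n}) a a' b b' :
  a != a' -> b != b' -> (a, b) \in X -> (a', b') \in X ->
  (matching_number X).-1 <= matching_number (sw X a a' b b').
Proof.
move=> na nb H1 H2.
have [M [HM <-]] := nu_att X.
move: HM => /andP [sMX /forall_inP HM].
have HM' : forall e1 e2, e1 \in M -> e2 \in M -> e1 != e2 -> (e1.1 != e2.1) && (e1.2 != e2.2).
  move=> e1 e2 i1 i2; move: (HM e1 i1) => /forall_inP /(_ e2 i2) /implyP; done.
set N := M :\ (a, b) :\ (a', b').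
have sNX : N \subset sw X a a' b b'.
  apply/subsetP => x; rewrite /N /sw !inE => /and3P [-> -> xM].
  by rewrite (subsetP sMX _ xM).
have mN : forall Y : {set 'I_m * 'I_n}, Y \subset N -> is_matching (sw X a a' b b') Y.
  move=> Y sY; rewrite /is_matching (subset_trans sY sNX) /=.
  apply/forall_inP => e1 i1; apply/forall_inP => e2 i2; apply/implyP.
  apply: HM'; [move: (subsetP sY _ i1) | move: (subsetP sY _ i2)];
    by rewrite !inE => /and3P [].
have cN : #|M| <= (((a, b) \in M) + ((a', b') \in M)) + #|N|.
  rewrite (cardsD1 (a, b) M) (cardsD1 (a', b') (M :\ (a, b))) /N.
  rewrite inE; case: ((a', b') \in M); case: ((a', b') \notin [set (a, b)]); case: ((a, b) \in M) => /=; rewrite ?add0n ?addnA // leq_add2r; done.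
case Hb: (((a, b) \in M) && ((a', b') \in M)); last first.
  apply: leq_trans (nu_ge (mN N (subxx _))).
  move: cN Hb; case: ((a, b) \in M); case: ((a', b') \in M) => /=; lia.
move/andP: Hb => [i1 i2].
have fN : (a, b') \notin N.
  apply/negP; rewrite /N !inE => /and3P [n2 _ H].
  by move: (HM' _ _ H i2 n2) => /andP [_]; rewrite eqxx.
have mN1 : is_matching (sw X a a' b b') ((a, b') |: N).
  rewrite /is_matching; apply/andP; split.
    apply/subsetP => x; rewrite in_setU1 => /orP [/eqP -> | xN].
      by rewrite /sw !inE eqxx orbT.
    exact: (subsetP sNX).
  have fr : forall x, x \in N -> (x.1 != a) && (x.2 != b').
    move=> x; rewrite /N !inE => /and3P [x2 x1 xM]; apply/andP; split.
      by have /andP [] := HM' _ _ xM i1 x1.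
    by have /andP [] := HM' _ _ xM i2 x2.
  apply/forall_inP => e1; rewrite in_setU1 => /orP [/eqP -> | x1];
  apply/forall_inP => e2; rewrite in_setU1 => /orP [/eqP -> | x2]; apply/implyP.
  - by rewrite eqxx.
  - by move: (fr _ x2) => /andP [p q] _ /=; rewrite eq_sym p eq_sym q.
  - by move: (fr _ x1) => /andP [p q] _ /=; rewrite p q.
  - move=> ne; apply: HM' ne; [move: x1 | move: x2]; by rewrite /N !inE => /and3P [].
apply: leq_trans (nu_ge mN1); rewrite cardsU1 fN.
by move: cN; rewrite i1 i2 /=; lia.
Qed.

Lemma card_swap (T : finType) (S : {set T}) u v :
  u \in S -> v \notin S -> #|v |: (S :\ u)| = #|S|.
Proof.
move=> uS vS; rewrite cardsU1 (cardsD1 u S) uS !inE negb_and vS orbT.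
by rewrite add1n.
Qed.

Ltac bsolve := rewrite ?eqxx /=;
  repeat (match goal with
  | H : is_true (?x != ?y) |- context [?x == ?y] => rewrite (negbTE H)
  | H : is_true (?x != ?y) |- context [?y == ?x] => rewrite (eq_sym y x) (negbTE H)
  | H : is_true (?p \in ?X) |- context [?p \in ?X] => rewrite H
  | H : is_true (?p \notin ?X) |- context [?p \in ?X] => rewrite (negbTE H)
  end; rewrite ?eqxx /=); rewrite ?andbT ?andbF ?orbT ?orbF //=.

Section S. End S.

Lemma sw_back m n (X : {set 'I_m * 'I_n}) a a' b b' :
  a != a' -> b != b' -> (a, b) \in X -> (a', b') \in X ->
  (a, b') \notin X -> (a', b) \notin X ->
  sw (sw X a a' b b') a a' b' b = X.
Proof.
move=> na nb H1 H2 H3 H4; apply/setP => [[x y]]; rewrite /sw !inE !xpair_eqE.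
have [->|xa] := eqVneq x a; last have [->|xa'] := eqVneq x a'.
all: (have [->|yb] := eqVneq y b; last have [->|yb'] := eqVneq y b').
all: bsolve.
Qed.

Lemma sw_degA m n (X : {set 'I_m * 'I_n}) a a' b b' c :
  a != a' -> b != b' -> (a, b) \in X -> (a', b') \in X ->
  (a, b') \notin X -> (a', b) \notin X ->
  degA (sw X a a' b b') c = degA X c.
Proof.
move=> na nb H1 H2 H3 H4; rewrite /degA.
have [->|ca] := eqVneq c a.
  have -> : [set y | (a, y) \in sw X a a' b b'] = b' |: ([set y | (a, y) \in X] :\ b).
    apply/setP => y; rewrite /sw !inE !xpair_eqE.
    have [->|yb] := eqVneq y b; last have [->|yb'] := eqVneq y b'.
    all: bsolve.
  by apply: card_swap; rewrite inE.
have [->|ca'] := eqVneq c a'.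
  have -> : [set y | (a', y) \in sw X a a' b b'] = b |: ([set y | (a', y) \in X] :\ b').
    apply/setP => y; rewrite /sw !inE !xpair_eqE.
    have [->|yb] := eqVneq y b; last have [->|yb'] := eqVneq y b'.
    all: bsolve.
  by apply: card_swap; rewrite inE.
apply: eq_card => y; rewrite /sw !inE !xpair_eqE; bsolve.
Qed.

Lemma sw_degB m n (X : {set 'I_m * 'I_n}) a a' b b' c :
  a != a' -> b != b' -> (a, b) \in X -> (a', b') \in X ->
  (a, b') \notin X -> (a', b) \notin X ->
  degB (sw X a a' b b') c = degB X c.
Proof.
move=> na nb H1 H2 H3 H4; rewrite /degB.
have [->|cb] := eqVneq c b.
  have -> : [set x | (x, b) \in sw X a a' b b'] = a' |: ([set x | (x, b) \in X] :\ a).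
    apply/setP => x; rewrite /sw !inE !xpair_eqE.
    have [->|xa] := eqVneq x a; last have [->|xa'] := eqVneq x a'.
    all: bsolve.
  by apply: card_swap; rewrite inE.
have [->|cb'] := eqVneq c b'.
  have -> : [set x | (x, b') \in sw X a a' b b'] = a |: ([set x | (x, b') \in X] :\ a').
    apply/setP => x; rewrite /sw !inE !xpair_eqE.
    have [->|xa] := eqVneq x a; last have [->|xa'] := eqVneq x a'.
    all: bsolve.
  by apply: card_swap; rewrite inE.
apply: eq_card => x; rewrite /sw !inE !xpair_eqE; bsolve.
Qed.

Definition sameDeg m n (E F : {set 'I_m * 'I_n}) :=
  (forall a, degA E a = degA F a) /\ (forall b, degB E b = degB F b).

Lemma exists_other (T : finType) (X Y : {set T}) x :
  #|X| = #|Y| -> x \in X -> x \notin Y -> exists2 y, y \in Y & y \notin X.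
Proof.
move=> c xX xY; apply: NNPP => H.
have sYX : Y \subset X.
  apply/subsetP => y yY; apply: NNPP => yX; apply: H; exists y => //; exact/negP.
have : Y \proper X by apply/properP; split => //; exists x.
move/proper_card; lia.
Qed.

Lemma pattern m n (E F : {set 'I_m * 'I_n}) : sameDeg E F -> E :\: F != set0 ->
  exists a1 b1 a2 b2, [/\ (a1, b1) \in E :\: F, (a2, b1) \in F :\: E,
    (a2, b2) \in E :\: F & (a1, b2) \notin E :\: F].
Proof.
move=> [dA dB] /set0Pn [[x0 y0] H0].
apply: NNPP => NP.
have NP' : forall a1 b1 a2 b2, (a1, b1) \in E :\: F -> (a2, b1) \in F :\: E ->
    (a2, b2) \in E :\: F -> (a1, b2) \in E :\: F.
  move=> a1 b1 a2 b2 h1 h2 h3; apply: NNPP => /negP h4; apply: NP.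
  by exists a1, b1, a2, b2.
pose rd a := #|[set b | (a, b) \in E :\: F]|.
have P0 : 0 < rd x0 by apply/card_gt0P; exists y0; rewrite inE.
case: (@arg_minnP _ x0 (fun a => 0 < rd a) rd P0) => a0 Pa0 Hmin.
move/card_gt0P: Pa0 => [b1]; rewrite inE => Hb1.
move: (Hb1); rewrite inE => /andP [b1F b1E].
have [a2] : exists2 a2, a2 \in [set a | (a, b1) \in F] & a2 \notin [set a | (a, b1) \in E].
  apply: (exists_other (x := a0)); last by rewrite inE.
    by move: (dB b1); rewrite /degB.
  by rewrite inE.
rewrite !inE => a2F a2E.
have [b2] : exists2 b2, b2 \in [set b | (a2, b) \in E] & b2 \notin [set b | (a2, b) \in F].
  apply: (exists_other (x := b1)); last by rewrite inE.
    by move: (dA a2); rewrite /degA.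
  by rewrite inE.
rewrite !inE => b2E b2F.
have h2 : (a2, b1) \in F :\: E by rewrite inE a2E.
have sub : [set b | (a2, b) \in E :\: F] \subset [set b | (a0, b) \in E :\: F].
  apply/subsetP => b hb; have hb' : (a2, b) \in E :\: F by move: hb; rewrite !inE.
  by have := NP' _ _ _ _ Hb1 h2 hb'; rewrite !inE.
have P2 : 0 < rd a2 by apply/card_gt0P; exists b2; rewrite !inE b2E b2F.
have := Hmin a2 P2; rewrite /rd => le1.
have : [set b | (a2, b) \in E :\: F] == [set b | (a0, b) \in E :\: F].
  by rewrite eqEcard sub le1.
move/eqP => Heq.
have : b1 \in [set b | (a0, b) \in E :\: F] by rewrite inE.
rewrite -Heq !inE => /andP [_]; by rewrite (negbTE a2E).
Qed.

Lemma arith x x' y nu : minn x y <= nu <= maxn x y -> x.-1 <= x' -> x'.-1 <= x ->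
  (minn x' y <= nu <= maxn x' y) \/ nu = x.
Proof. lia. Qed.

Lemma measure (T : finType) (Y Z : {set T}) x y1 y2 :
  y1 \in Z -> y2 \in Z -> y1 != y2 -> Y \subset x |: (Z :\ y1 :\ y2) -> #|Y| < #|Z|.
Proof.
move=> i1 i2 ne /subset_leq_card; rewrite cardsU1 (cardsD1 y1 Z) i1.
rewrite (cardsD1 y2 (Z :\ y1)).
have -> : y2 \in Z :\ y1 by rewrite in_setD1 i2 eq_sym ne.
case: (x \notin _) => /=; lia.
Qed.

Lemma sameDeg_sym m n (E F : {set 'I_m * 'I_n}) : sameDeg E F -> sameDeg F E.
Proof. by move=> [h1 h2]; split => x; rewrite ?h1 ?h2. Qed.

Lemma sameDeg_trans m n (E F G : {set 'I_m * 'I_n}) : sameDeg E F -> sameDeg F G -> sameDeg E G.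
Proof. by move=> [h1 h2] [h3 h4]; split => x; rewrite ?h1 ?h2 ?h3 ?h4. Qed.

Lemma sameDeg_refl m n (E : {set 'I_m * 'I_n}) : sameDeg E E.
Proof. by split. Qed.

Lemma sw_same m n (X : {set 'I_m * 'I_n}) a a' b b' :
  a != a' -> b != b' -> (a, b) \in X -> (a', b') \in X ->
  (a, b') \notin X -> (a', b) \notin X ->
  [/\ sameDeg (sw X a a' b b') X,
      (matching_number X).-1 <= matching_number (sw X a a' b b') &
      (matching_number (sw X a a' b b')).-1 <= matching_number X].
Proof.
move=> na nb H1 H2 H3 H4; split.
- by split => c; [apply: sw_degA | apply: sw_degB].
- exact: sw_nu.
rewrite -{2}(sw_back na nb H1 H2 H3 H4); apply: sw_nu => //; first by rewrite eq_sym.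
  by rewrite /sw !inE eqxx orbT.
by rewrite /sw !inE eqxx !orbT.
Qed.

Lemma empty_case m n (E F : {set 'I_m * 'I_n}) : sameDeg E F -> E :\: F = set0 -> E = F.
Proof.
move=> [dA dB] /eqP; rewrite setD_eq0 => sEF.
apply/eqP; rewrite eqEsubset sEF /=; apply/subsetP => x xF; apply: NNPP => xE.
have [y] : exists2 y, y \in [set b | (x.1, b) \in E] & y \notin [set b | (x.1, b) \in F].
  apply: (exists_other (x := x.2)).
  - by move: (dA x.1); rewrite /degA => ->.
  - by rewrite inE -surjective_pairing.
  - by rewrite inE -surjective_pairing; apply/negP.
by rewrite !inE => /(subsetP sEF) ->.
Qed.

Lemma chain m n k : forall E F : {set 'I_m * 'I_n}, #|E :\: F| <= k -> sameDeg E F ->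
  forall nu, minn (matching_number E) (matching_number F) <= nu <=
             maxn (matching_number E) (matching_number F) ->
  exists G, sameDeg G E /\ matching_number G = nu.
Proof.
elim: k => [|k IH] E F hk hs nu hnu;
  (case: (eqVneq (E :\: F) set0) => [e0|ne0];
  [ move: (empty_case hs e0) hnu => <-; rewrite minnn maxnn -eqn_leq => /eqP <-; exists E; split; [exact: sameDeg_refl | done] | ]).
  by move: hk; rewrite leqn0 cards_eq0 (negbTE ne0).
have [a1 [b1 [a2 [b2 [h1 h2 h3 h4]]]]] := pattern hs ne0.
move: (h1) (h2) (h3); rewrite !inE => /andP [f1 e1] /andP [e2 f2] /andP [f3 e3].
have na : a1 != a2 by apply/eqP => e; move: e2; rewrite -e e1.
have nb : b1 != b2 by apply/eqP => e; move: e2; rewrite e e3.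
case: (boolP ((a1, b2) \in E)) => e4.
- have f4 : (a1, b2) \in F by move: h4; rewrite !inE e4 andbT negbK.
  have nb' : b2 != b1 by rewrite eq_sym.
  have [s1 s2 s3] := sw_same na nb' f4 f2 f1 f3.
  have hm : #|E :\: sw F a1 a2 b2 b1| <= k.
    rewrite -ltnS; apply: leq_trans hk; apply: (measure (x := (a1, b2)) h1 h3).
      by rewrite xpair_eqE negb_and nb orbT.
    { apply/subsetP => -[x y]; rewrite /sw !inE !xpair_eqE.
    have [->|xa] := eqVneq x a1; last have [->|xa'] := eqVneq x a2.
    all: (have [->|yb] := eqVneq y b1; last have [->|yb'] := eqVneq y b2).
    all: bsolve. }
  have hs' : sameDeg E (sw F a1 a2 b2 b1) by apply: sameDeg_trans hs (sameDeg_sym s1).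
  have hnu' : minn (matching_number F) (matching_number E) <= nu <=
               maxn (matching_number F) (matching_number E) by rewrite minnC maxnC.
  case: (arith hnu' s2 s3).
  + by move=> hr; apply: (IH _ _ hm hs'); rewrite minnC maxnC.
  + move=> ->; exists F; split => //; exact: sameDeg_sym.
- have [s1 s2 s3] := sw_same na nb e1 e3 e4 e2.
  have hm : #|sw E a1 a2 b1 b2 :\: F| <= k.
    rewrite -ltnS; apply: leq_trans hk; apply: (measure (x := (a1, b2)) h1 h3).
      by rewrite xpair_eqE negb_and nb orbT.
    { apply/subsetP => -[x y]; rewrite /sw !inE !xpair_eqE.
    have [->|xa] := eqVneq x a1; last have [->|xa'] := eqVneq x a2.
    all: (have [->|yb] := eqVneq y b1; last have [->|yb'] := eqVneq y b2).
    all: bsolve. }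
  have hs' : sameDeg (sw E a1 a2 b1 b2) F by apply: sameDeg_trans s1 hs.
  case: (arith hnu s2 s3).
  + move=> hr; have [G [G1 G2]] := IH _ _ hm hs' nu hr.
    by exists G; split => //; apply: sameDeg_trans G1 s1.
  + move=> ->; exists E; split => //; exact: sameDeg_refl.
Qed.

Lemma perm_deg m (f g : 'I_m -> nat) :
  sort geq [seq f a | a <- enum 'I_m] = sort geq [seq g a | a <- enum 'I_m] ->
  exists p : {perm 'I_m}, forall a, f a = g (p a).
Proof.
move=> e.
have pe : perm_eq [seq f a | a <- enum 'I_m] [tuple g a | a < m].
  rewrite -(perm_sort geq) e (perm_sort geq) /=.
  done.
case/tuple_permP: pe => p hp; exists p => a.
have : [tuple f i | i < m] = [tuple tnth [tuple g a | a < m] (p i) | i < m].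
  by apply: val_inj; rewrite /= -hp.
by move/(congr1 (fun t => tnth t a)); rewrite !tnth_mktuple.
Qed.

Definition relab m n (p : {perm 'I_m}) (q : {perm 'I_n}) (G : {set 'I_m * 'I_n}) :
  {set 'I_m * 'I_n} := [set x | (p x.1, q x.2) \in G].

Lemma relab_degA m n p q (G : {set 'I_m * 'I_n}) a : degA (relab p q G) a = degA G (p a).
Proof.
rewrite /degA -(card_preimset [set b | (p a, b) \in G] (@perm_inj _ q)); apply: eq_card => b.
by rewrite !inE.
Qed.

Lemma relab_degB m n p q (G : {set 'I_m * 'I_n}) b : degB (relab p q G) b = degB G (q b).
Proof.
rewrite /degB -(card_preimset [set a | (a, q b) \in G] (@perm_inj _ p)); apply: eq_card => a.
by rewrite !inE.
Qed.

Lemma relab_nu m n p q (G : {set 'I_m * 'I_n}) :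
  matching_number G <= matching_number (relab p q G).
Proof.
have [M [/andP [sMG /forall_inP HM] <-]] := nu_att G.
pose f (x : 'I_m * 'I_n) := (p x.1, q x.2).
have fi : injective f.
  move=> [x1 x2] [y1 y2] [/perm_inj -> /perm_inj ->]; done.
rewrite -(card_preimset M fi); apply: nu_ge.
rewrite /is_matching; apply/andP; split.
  apply/subsetP => x; rewrite !inE => /(subsetP sMG); done.
apply/forall_inP => e1; rewrite inE => i1; apply/forall_inP => e2; rewrite inE => i2.
apply/implyP => ne.
have ne' : f e1 != f e2 by apply: contra ne => /eqP /fi ->.
move: (HM _ i1) => /forall_inP /(_ _ i2) /implyP /(_ ne') /andP [h1 h2].
apply/andP; split.
  by apply: contra h1 => /eqP e; rewrite /f /= e.
by apply: contra h2 => /eqP e; rewrite /f /= e.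
Qed.

Lemma size_real m n (G : {set 'I_m * 'I_n}) dA dB : realizes G dA dB ->
  size dA = m /\ size dB = n.
Proof.
rewrite /realizes /bdeg_seq => -[<- <-]; by rewrite !size_sort !size_map -!enumT !size_enum_ord.
Qed.

Theorem theorem4 (dA dB : seq nat)
  (m1 n1 : nat) (G1 : {set 'I_m1 * 'I_n1})
  (m2 n2 : nat) (G2 : {set 'I_m2 * 'I_n2})
  (nu_min nu_max nu : nat) :
  realizes G1 dA dB -> matching_number G1 = nu_min ->
  realizes G2 dA dB -> matching_number G2 = nu_max ->
  nu_min <= nu <= nu_max ->
  exists (m n : nat) (G : {set 'I_m * 'I_n}),
    realizes G dA dB /\ matching_number G = nu.
Proof.
move=> r1 h1 r2 h2 hnu.
have [sA1 sB1] := size_real r1; have [sA2 sB2] := size_real r2.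
have em : m2 = m1 by rewrite -sA1 -sA2.
have en : n2 = n1 by rewrite -sB1 -sB2.
clear sA2 sB2; subst m2 n2.
move: (r1) (r2); rewrite /realizes /bdeg_seq => -[ea1 eb1] [ea2 eb2].
have [p hp] : exists p : {perm 'I_m1}, forall a, degA G1 a = degA G2 (p a).
  by apply: perm_deg; rewrite ea1 ea2.
have [q hq] : exists q : {perm 'I_n1}, forall b, degB G1 b = degB G2 (q b).
  by apply: perm_deg; rewrite eb1 eb2.
have hs : sameDeg G1 (relab p q G2).
  by split => x; rewrite ?relab_degA ?relab_degB.
have hle := relab_nu p q G2.
have hr : minn (matching_number G1) (matching_number (relab p q G2)) <= nu <=
          maxn (matching_number G1) (matching_number (relab p q G2)).
  move: hle hnu; rewrite h1 h2.
  move: (matching_number (relab p q G2)) => k hk /andP [l1 l2].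
  apply/andP; split.
    by rewrite geq_min l1.
  by rewrite leq_max (leq_trans l2 hk) orbT.
have [G [[gA gB] gnu]] := chain (leqnn _) hs hr.
exists m1, n1, G; split => //.
rewrite -r1 /bdeg_seq; congr (sort _ _, sort _ _); apply: eq_map => x; by rewrite ?gA ?gB.
Qed.
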